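(* Let $k\ge 2$, let $B_k$ be the automorphism group of the binary rooted tree $X^{[k]}$ and $G_k\le B_k$ the subgroup of automorphisms acting on the leaves $X^k$ by even permutations (so $G_k\cong\mathrm{Syl}_2(A_{2^k})$). An element $g\in G_k$ belongs to $G_k'$ if and only if the index of $g$ on $X^l$ is even for every $0\le l<k-1$, and moreover the number of active vertices of $g$ on level $X^{k-1}$ lying in the subtree rooted at $v_{11}$ is even and the number of those lying in the subtree rooted at $v_{12}$ is even.
   Context: $X=\{0,1\}$; $X^{[k]}$ is the binary rooted tree with levels $X^0,\dots,X^k$; $v_{11},v_{12}$ are the two vertices of level $1$. Each automorphism has at every vertex $v$ of level $<k$ a vertex permutation in $S_2$; $v$ is active if it is nontrivial. The index of $g$ on $X^l$ is the number of active vertices of $g$ in $X^l$. *)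

(* Defs.v *)
From HB Require Import structures.
From mathcomp Require Import all_boot all_order all_fingroup.
Set Implicit Arguments. Unset Strict Implicit. Unset Printing Implicit Defensive.

(* The binary rooted tree X^[k], X = {0,1} encoded by bool (0 = false, 1 = true).
   A vertex of level l is a word of length l, i.e. an element of l.-tuple bool;
   the leaves X^k are the elements of k.-tuple bool.  The first letter of a
   word is the one read at the root, so v11 = [:: false], v12 = [:: true]. *)

Definition leaf (k : nat) := (k.-tuple bool)%type.

(* A permutation of the leaves is a tree automorphism iff it preserves, for
   every level l, the relation "having the same ancestor at level l". *)
Definition is_tree_aut (k : nat) (g : {perm leaf k}) : bool :=
  [forall l : 'I_k.+1, forall x : leaf k, forall y : leaf k,
     (take l x == take l y) ==> (take l (g x) == take l (g y))].

Definition B (k : nat) : {set {perm leaf k}} := [set g | is_tree_aut g].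

Definition G (k : nat) : {set {perm leaf k}} := [set g in B k | ~~ odd_perm g].

Definition zero_ext (k : nat) (v : seq bool) : leaf k :=
  [tuple nth false v i | i < k].

(* Vertex permutation of g at a vertex v of level l < k: g maps the child v0
   to either g(v)0 (trivial) or g(v)1 (active); that is read off as the letter
   at position l of the image of the leaf v00...0. *)
Definition active (k l : nat) (g : {perm leaf k}) (v : l.-tuple bool) : bool :=
  nth false (g (zero_ext k v)) l.

Definition level_index (k l : nat) (g : {perm leaf k}) : nat :=
  #|[set v : l.-tuple bool | active g v]|.

Definition last_level_count (k : nat) (g : {perm leaf k}) (b : bool) : nat :=
  #|[set v : (k.-1).-tuple bool | active g v && (nth false v 0 == b)]|.

(* Main.v *)
Require Import Defs.
From mathcomp Require Import all_boot all_order all_fingroup.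

Set Implicit Arguments. Unset Strict Implicit. Unset Printing Implicit Defensive.

Definition lab := seq bool -> bool.

Definition img (a : lab) (v : seq bool) : seq bool :=
  mkseq (fun i => nth false v i (+) a (take i v)) (size v).

Definition lcomp (a b : lab) : lab := fun v => a v (+) b (img a v).

Lemma size_img a v : size (img a v) = size v.
Proof. by rewrite size_mkseq. Qed.

Lemma nth_img a v i : i < size v -> nth false (img a v) i = nth false v i (+) a (take i v).
Proof. by move=> hi; rewrite nth_mkseq. Qed.

Lemma take_img a v i : take i (img a v) = img a (take i v).
Proof.
case: (leqP (size v) i) => hi.
  by rewrite !take_oversize // size_img.
apply: (eq_from_nth (x0 := false)).
  by rewrite size_img !size_takel // ?size_img ltnW.
move=> j; rewrite size_takel ?size_img ?(ltnW hi) // => hj.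
rewrite nth_take // nth_img ?(ltn_trans hj hi) // nth_img ?size_takel ?(ltnW hi) //.
by rewrite nth_take // take_takel // ltnW.
Qed.

Lemma img_inj a u v : size u = size v -> img a u = img a v -> u = v.
Proof.
move=> hs he.
suff H : forall j, take j u = take j v by rewrite -(take_size u) H hs take_size.
elim=> [|j IH]; first by rewrite !take0.
case: (leqP (size u) j) => hj.
  have -> : u = v by rewrite -(take_oversize hj) IH take_oversize // -hs.
  by [].
have hj' : j < size v by rewrite -hs.
rewrite (take_nth false hj) (take_nth false hj') IH; congr rcons.
have := congr1 (fun s => nth false s j) he.
by rewrite !nth_img // IH => /addIb.
Qed.

Lemma img_eq a b v : (forall u, size u < size v -> a u = b u) -> img a v = img b v.
Proof.
move=> h; apply: (eq_from_nth (x0 := false)); rewrite ?size_img // => i hi.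
by rewrite !nth_img // h // size_takel // ltnW.
Qed.

Lemma img_id a v : (forall u, size u < size v -> a u = false) -> img a v = v.
Proof.
move=> h; apply: (eq_from_nth (x0 := false)); rewrite ?size_img // => i hi.
by rewrite !nth_img // h ?addbF // size_takel // ltnW.
Qed.

Lemma img_comp a b v : img (lcomp a b) v = img b (img a v).
Proof.
apply: (eq_from_nth (x0 := false)); rewrite ?size_img // => i hi.
rewrite nth_img // nth_img ?size_img // nth_img // /lcomp take_img.
by rewrite addbA.
Qed.

Lemma nth0_img a v : 0 < size v -> nth false (img a v) 0 = nth false v 0 (+) a [::].
Proof. by move=> h; rewrite nth_img // take0. Qed.

Lemma negb_eqF (x : bool) : (~~ x == x) = false.
Proof. by case: x. Qed.

Set Implicit Arguments. Unset Strict Implicit. Unset Printing Implicit Defensive.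

Lemma card_sumb (T : finType) (p : pred T) : #|[set x | p x]| = \sum_x (p x : nat).
Proof.
rewrite -sum1_card big_mkcond /=; apply: eq_bigr => x _; rewrite inE.
by case: (p x).
Qed.

Lemma odd_card_xor (T : finType) (p q : pred T) :
  odd #|[set x | p x (+) q x]| = odd #|[set x | p x]| (+) odd #|[set x | q x]|.
Proof.
have e : #|[set x | p x (+) q x]| + 2 * #|[set x | p x && q x]| = #|[set x | p x]| + #|[set x | q x]|.
  rewrite !card_sumb big_distrr -!big_split /=; apply: eq_bigr => x _.
  by case: (p x); case: (q x).
by rewrite -oddD -e oddD oddM /= addbF.
Qed.

Section Lev.
Variable l : nat.

Lemma timg_proof a (v : l.-tuple bool) : size (img a v) == l.
Proof. by rewrite size_img size_tuple. Qed.

Definition timg a (v : l.-tuple bool) : l.-tuple bool := Tuple (timg_proof a v).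

Lemma timg_inj a : injective (timg a).
Proof.
move=> u v /(congr1 (fun t : l.-tuple bool => (t : seq bool))) /= /img_inj.
by rewrite !size_tuple => h; apply: val_inj; apply: h.
Qed.

Definition Lc' (a : lab) := #|[set v : l.-tuple bool | a v]|.
Definition Lcb (a : lab) c := #|[set v : l.-tuple bool | a v && (nth false v 0 == c)]|.

Lemma Lc_lcomp a b : odd (Lc' (lcomp a b)) = odd (Lc' a) (+) odd (Lc' b).
Proof.
rewrite /Lc' /lcomp odd_card_xor; congr (_ (+) odd _).
have -> : [set v : l.-tuple bool | b (img a v)] = timg a @^-1: [set w : l.-tuple bool | b w].
  by apply/setP => v; rewrite !inE.
by rewrite card_preimset //; apply: timg_inj.
Qed.

Lemma Lcb_lcomp a b c : 0 < l ->
  odd (Lcb (lcomp a b) c) = odd (Lcb a c) (+) odd (Lcb b (c (+) a [::])).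
Proof.
move=> hl.
have -> : Lcb (lcomp a b) c = #|[set v : l.-tuple bool | (a v && (nth false v 0 == c)) (+)
     (b (img a v) && (nth false v 0 == c))]|.
  by apply: eq_card => v; rewrite !inE /lcomp andb_addl.
rewrite odd_card_xor; congr (_ (+) odd _).
have -> : [set v : l.-tuple bool | b (img a v) && (nth false v 0 == c)] =
     timg a @^-1: [set w : l.-tuple bool | b w && (nth false w 0 == c (+) a [::])].
  apply/setP => v; rewrite !inE /= nth0_img ?size_tuple //.
  by case: (nth false v 0); case: c; case: (a [::]).
by rewrite card_preimset //; apply: timg_inj.
Qed.

Lemma Lc_split a : Lc' a = Lcb a false + Lcb a true.
Proof.
rewrite /Lc' /Lcb !card_sumb -big_split /=; apply: eq_bigr => v _.
by case: (a v); case: (nth false v 0).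
Qed.

End Lev.

Set Implicit Arguments. Unset Strict Implicit. Unset Printing Implicit Defensive.

Section Leaves.
Variable k : nat.

Definition mkf (a : lab) (x : leaf k) : leaf k := [tuple nth false x i (+) a (take i x) | i < k].

Lemma val_mkf a x : (mkf a x : seq bool) = img a x.
Proof.
rewrite /img size_tuple /mkseq -val_enum_ord -map_comp /=.
by [].
Qed.

Lemma mkf_inj a : injective (mkf a).
Proof.
move=> x y /(congr1 (fun t : leaf k => (t : seq bool))) /=; rewrite !val_mkf => /img_inj.
by rewrite !size_tuple => h; apply: val_inj; apply: h.
Qed.

Definition mkp a : {perm leaf k} := perm (@mkf_inj a).

Lemma val_mkp a x : (mkp a x : seq bool) = img a x.
Proof. by rewrite permE val_mkf. Qed.

Lemma mkp_eq a b : (forall u, size u < k -> a u = b u) -> mkp a = mkp b.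
Proof.
move=> h; apply/permP => x; apply: val_inj; rewrite /= !val_mkp; apply: img_eq => u.
by rewrite size_tuple; apply: h.
Qed.

Lemma mkpM a b : (mkp a * mkp b)%g = mkp (lcomp a b).
Proof.
by apply/permP => x; apply: val_inj; rewrite permM /= !val_mkp img_comp.
Qed.

Lemma mkp1 a : (forall u, size u < k -> a u = false) -> mkp a = 1%g.
Proof.
move=> h; apply/permP => x; apply: val_inj; rewrite /= val_mkp perm1 img_id // => u.
by rewrite size_tuple; apply: h.
Qed.

Definition vact (g : {perm leaf k}) (v : seq bool) : bool :=
  nth false (g (zero_ext k v)) (size v).

Lemma val_zero_ext v : (zero_ext k v : seq bool) = mkseq (nth false v) k.
Proof. by rewrite /mkseq -val_enum_ord -map_comp. Qed.

Lemma nth_zero_ext v i : i < k -> nth false (zero_ext k v) i = nth false v i.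
Proof. by move=> hi; rewrite val_zero_ext nth_mkseq. Qed.

Lemma take_zero_ext v : size v <= k -> take (size v) (zero_ext k v) = v.
Proof.
move=> hv; apply: (eq_from_nth (x0 := false)); first by rewrite size_takel // size_tuple.
move=> i; rewrite size_takel ?size_tuple // => hi.
by rewrite nth_take // nth_zero_ext // (leq_trans hi hv).
Qed.

Lemma act_mkp a v : size v < k -> vact (mkp a) v = a v.
Proof.
move=> hv; rewrite /vact val_mkp nth_img ?size_tuple // nth_zero_ext //.
by rewrite nth_default // take_zero_ext // ltnW.
Qed.

Lemma act_ge g v : k <= size v -> vact g v = false.
Proof. by move=> hv; rewrite /vact nth_default // size_tuple. Qed.

Lemma tree_autP (g : {perm leaf k}) : reflect
  (forall l (x y : leaf k), take l x = take l y -> take l (g x) = take l (g y))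
  (is_tree_aut g).
Proof.
apply: (iffP idP).
  move=> /forallP H l x y hxy.
  case: (ltnP l k.+1) => hl.
    by have /forallP/(_ x)/forallP/(_ y)/implyP := H (Ordinal hl); rewrite hxy eqxx => /(_ isT)/eqP.
  have hx : take l x = x by rewrite take_oversize // size_tuple ltnW.
  have hy : take l y = y by rewrite take_oversize // size_tuple ltnW.
  have -> : x = y by apply: val_inj; rewrite /= -hx -hy.
  by [].
move=> H; apply/forallP => l; apply/forallP => x; apply/forallP => y; apply/implyP => /eqP h.
by apply/eqP; apply: H.
Qed.

Lemma tree_mkp a : is_tree_aut (mkp a).
Proof. by apply/tree_autP => l x y h; rewrite !val_mkp !take_img h. Qed.
Lemma tree1 : is_tree_aut (1%g : {perm leaf k}).
Proof. by apply/tree_autP => l x y h; rewrite !perm1. Qed.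

Lemma tree_mul (g h : {perm leaf k}) : is_tree_aut g -> is_tree_aut h -> is_tree_aut (g * h)%g.
Proof.
move=> /tree_autP Hg /tree_autP Hh; apply/tree_autP => l x y e.
by rewrite !permM; apply: Hh; apply: Hg.
Qed.

Lemma tree_exp (g : {perm leaf k}) n : is_tree_aut g -> is_tree_aut (g ^+ n)%g.
Proof.
move=> Hg; elim: n => [|n IH]; first by rewrite expg0 tree1.
by rewrite expgS tree_mul.
Qed.

Lemma tree_inv (g : {perm leaf k}) : is_tree_aut g -> is_tree_aut (g^-1)%g.
Proof. by move=> Hg; rewrite invg_expg tree_exp. Qed.

Lemma tree_eq (g : {perm leaf k}) : is_tree_aut g -> g = mkp (vact g).
Proof.
move=> Hg; have Hg' := tree_inv Hg.
move/tree_autP: Hg => Hg; move/tree_autP: Hg' => Hg'.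
apply/permP => x; apply: val_inj; rewrite /= val_mkp.
apply: (eq_from_nth (x0 := false)); first by rewrite size_img !size_tuple.
rewrite size_tuple => i hi; rewrite nth_img ?size_tuple //.
set z := zero_ext k (take i x).
have hti : size (take i x) = i by rewrite size_takel // size_tuple ltnW.
have -> : vact g (take i x) = nth false (g z) i by rewrite /vact hti.
have tz : take i z = take i x by rewrite -{1}hti take_zero_ext // hti ltnW.
have nz : nth false z i = false by rewrite nth_zero_ext // nth_default // hti.
have key : forall y : leaf k, take i.+1 y = rcons (take i y) (nth false y i).
  by move=> y; rewrite (take_nth false) // size_tuple.
have gi : take i (g x) = take i (g z) by apply: Hg.
case hx : (nth false x i) => /=.
  case e: (nth false (g x) i == nth false (g z) i); last first.
    by move: e; case: (nth false (g x) i); case: (nth false (g z) i).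
  move/eqP: e => e; exfalso.
  have : take i.+1 (g x) = take i.+1 (g z) by rewrite !key gi e.
  move/Hg'; rewrite !permK !key tz hx nz => /eqP.
  by rewrite eqseq_rcons eqxx.
have : take i.+1 x = take i.+1 z by rewrite !key tz hx nz.
by move/Hg; rewrite !key => /eqP; rewrite eqseq_rcons => /andP [_ /eqP].
Qed.

Lemma mkp_invol (a : lab) l : (forall v, a v -> size v = l) -> (mkp a * mkp a)%g = 1%g.
Proof.
move=> ha; rewrite mkpM; apply: mkp1 => v _; rewrite /lcomp.
case: (leqP (size v) l) => hv.
  rewrite img_id ?addbb // => w hw; apply/negP => /ha hw'.
  by move: hw; rewrite hw' ltnNge hv.
have -> : a v = false by apply/negP => /ha e; move: hv; rewrite e ltnn.
by apply/negP => /ha; rewrite size_img => e; move: hv; rewrite e ltnn.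
Qed.

Lemma nth_mkf_eu u (x : leaf k) j : j < k ->
  nth false (mkf (fun v => v == u) x) j = nth false x j (+) ((j == size u) && (take (size u) x == u)).
Proof.
move=> hj; rewrite val_mkf nth_img ?size_tuple //.
have [->|ne] := eqVneq j (size u); first by rewrite ?eqxx.
rewrite /=; congr addb; apply/eqP => e; move/eqP: ne; apply.
by rewrite -e size_takel // size_tuple ltnW.
Qed.

Lemma val_mkt (f : nat -> bool) : ([tuple f i | i < k] : seq bool) = mkseq f k.
Proof. by rewrite /mkseq -val_enum_ord -map_comp. Qed.

Lemma nth_mkt (f : nat -> bool) j : j < k -> nth false [tuple f i | i < k] j = f j.
Proof. by move=> hj; rewrite val_mkt nth_mkseq. Qed.

Lemma eu_last u : size u = k.-1 -> 0 < k -> odd_perm (mkp (fun v => v == u)) = true.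
Proof.
move=> hu hk0.
have hk : k = (size u).+1 by rewrite hu prednK.
have sb : forall b, size (rcons u b) == k by move=> b; rewrite size_rcons hk.
pose y b : leaf k := Tuple (sb b).
have ty : forall b, take (size u) (y b) = u by move=> b; rewrite /= -cats1 take_size_cat.
have ny : forall b, nth false (y b) (size u) = b by move=> b; rewrite /= nth_rcons ltnn eqxx.
have iy : forall x : leaf k, take (size u) x == u -> x = y (nth false x (size u)).
  move=> x /eqP hx; apply: val_inj => /=.
  have h1 : size u < size x by rewrite size_tuple hk.
  transitivity (take (size u).+1 x); first by rewrite take_oversize // size_tuple hk.
  by rewrite (take_nth false h1) hx.
have ey : forall b, mkp (fun v => v == u) (y b) = y (~~ b).
  move=> b; apply: val_inj; rewrite permE.
  apply: (eq_from_nth (x0 := false)); first by rewrite !size_tuple.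
  rewrite size_tuple => j hj; rewrite nth_mkf_eu // ty eqxx andbT.
  rewrite /= !nth_rcons; case: ltngtP => //= _; first by rewrite addbF.
  by rewrite addbT.
have -> : mkp (fun v => v == u) = tperm (y false) (y true).
  apply/permP => x; case hx: (take (size u) x == u).
    by rewrite (iy x hx); case: (nth false x (size u)); rewrite ey /= ?tpermL ?tpermR.
  rewrite tpermD; first last.
  - by apply/negP => /eqP e; move: hx; rewrite -e ty eqxx.
  - by apply/negP => /eqP e; move: hx; rewrite -e ty eqxx.
  apply: val_inj; rewrite permE.
  apply: (eq_from_nth (x0 := false)); first by rewrite !size_tuple.
  by rewrite size_tuple => j hj; rewrite nth_mkf_eu // hx andbF addbF.
rewrite odd_tperm; apply/negP => /eqP e.
by have := ny false; rewrite e ny.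
Qed.

Lemma eu_mid u : (size u).+1 < k -> odd_perm (mkp (fun v => v == u)) = false.
Proof.
move=> hl; set l := size u.
have hl0 : l < k by apply: ltnW.
pose F (x : leaf k) (j : nat) := nth false x j (+) ((take l x == u) &&
   (((j == l) && nth false x l.+1) || (j == l.+1))).
pose hf (x : leaf k) : leaf k := [tuple F x i | i < k].
have nhf : forall x j, j < k -> nth false (hf x) j = nth false x j (+) ((take l x == u) &&
   (((j == l) && nth false x l.+1) || (j == l.+1))).
  by move=> x j hj; rewrite nth_mkt.
have thf : forall x, take l (hf x) = take l x.
  move=> x; apply: (eq_from_nth (x0 := false)); first by rewrite !size_takel ?size_tuple // ltnW.
  move=> j; rewrite size_takel ?size_tuple ?(ltnW hl0) // => hj.
  rewrite !nth_take // nhf ?(ltn_trans hj hl0) //.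
  by rewrite (ltn_eqF hj) (ltn_eqF (ltn_trans hj (ltnSn l))) andbF addbF.
have hh : forall x, hf (hf x) = mkp (fun v => v == u) x.
  move=> x; apply: val_inj; rewrite permE.
  apply: (eq_from_nth (x0 := false)); first by rewrite !size_tuple.
  rewrite size_tuple => j hj; rewrite nth_mkf_eu // !nhf // thf.
  rewrite -/l.
  case: (take l x == u); rewrite /= ?addbF //.
  have [->|nl] := eqVneq j l.
    rewrite (ltn_eqF (ltnSn l)) (gtn_eqF (ltnSn l)) eqxx /=.
    by case: (nth false x l); case: (nth false x l.+1).
  by case: (j == l.+1); case: (nth false x j).
by rewrite andbF addbF.
have hinv : forall x, mkp (fun v => v == u) (mkp (fun v => v == u) x) = x.
  move=> x; rewrite -permM (@mkp_invol _ l) ?perm1 //.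
  by move=> v /eqP ->.
have hc : cancel hf (fun y => hf (hf (hf y))) by move=> x; rewrite hh hh hinv.
have hinj : injective hf by exact: can_inj hc.
have -> : mkp (fun v => v == u) = (perm hinj * perm hinj)%g.
  by apply/permP => x; rewrite permM -hh !permE.
by rewrite (@odd_permM _ (perm hinj) (perm hinj)) addbb.
Qed.

Lemma eu_sign u : size u < k -> odd_perm (mkp (fun v => v == u)) = (size u == k.-1).
Proof.
move=> hu; have [e|ne] := eqVneq (size u) k.-1.
  by apply: eu_last => //; apply: leq_ltn_trans hu.
apply: eu_mid; rewrite ltn_neqAle hu andbT.
apply: contra ne => /eqP <-; by [].
Qed.

Lemma list_sign (s : seq (seq bool)) l : l < k -> uniq s -> (forall v, v \in s -> size v = l) ->
  odd_perm (mkp (fun v => v \in s)) = (l == k.-1) && odd (size s).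
Proof.
move=> hl; elim: s => [|u s IH] /=.
  by move=> _ _; rewrite (@mkp1 (fun v => v \in [::])) ?odd_perm1 ?andbF.
move=> /andP [us uniqs] hs.
have hu : size u = l by apply: hs; rewrite inE eqxx.
have hs' : forall v, v \in s -> size v = l by move=> v vs; apply: hs; rewrite inE vs orbT.
have -> : mkp (fun v => v \in u :: s) = (mkp (fun v => v \in s) * mkp (fun v => v == u))%g.
  rewrite mkpM; apply: mkp_eq => v _; rewrite /lcomp inE.
  case: (leqP (size v) l) => hv.
    rewrite img_id; last by move=> w hw; apply/negP => /hs' e; move: hw; rewrite e ltnNge hv.
    case: eqP => [->|_]; last by rewrite addbF.
    by rewrite (negbTE us).
  have -> : (v \in s) = false by apply/negP => /hs' e; move: hv; rewrite e ltnn.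
  have -> : (v == u) = false by apply/negP => /eqP e; move: hv; rewrite e hu ltnn.
  suff -> : (img (fun v => v \in s) v == u) = false by [].
  by apply/negbTE/negP => /eqP e; move: hv; rewrite -(size_img (fun v => v \in s) v) e hu ltnn.
rewrite odd_permM IH // eu_sign ?hu //.
by case: (l == k.-1); case: (odd (size s)).
Qed.


Lemma lev_sign a l : l < k ->
  odd_perm (mkp (fun v => (size v == l) && a v)) = (l == k.-1) && odd (Lc' l a).
Proof.
move=> hl.
set s := [seq val v | v <- enum [set v : l.-tuple bool | a v]].
have us : uniq s by rewrite map_inj_uniq ?enum_uniq //; apply: val_inj.
have hs : forall v, v \in s -> size v = l by move=> v /mapP [w _ ->]; rewrite size_tuple.
have -> : mkp (fun v => (size v == l) && a v) = mkp (fun v => v \in s).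
  apply: mkp_eq => v _.
  case: eqP => hv /=; last by apply/esym/negP => /hs.
  have hv' : size v == l by apply/eqP.
  have -> : v = val (Tuple hv') by [].
  by rewrite mem_map ?mem_enum ?inE //; apply: val_inj.
by rewrite (list_sign hl us hs) size_map -cardE.
Qed.

Lemma tr_sign a l : 0 < k -> l <= k ->
  odd_perm (mkp (fun v => (size v < l) && a v)) = (l == k) && odd (Lc' k.-1 a).
Proof.
move=> hk; elim: l => [|l IH] hl.
  by rewrite (@mkp1 (fun v => (size v < 0) && a v)) ?odd_perm1 // eq_sym (gtn_eqF hk).
have -> : mkp (fun v => (size v < l.+1) && a v) =
   (mkp (fun v => (size v == l) && a v) * mkp (fun v => (size v < l) && a v))%g.
  rewrite mkpM; apply: mkp_eq => v _; rewrite /lcomp size_img.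
  case: (ltngtP (size v) l) => hv /=.
  - rewrite img_id; first by rewrite ltnS (ltnW hv).
    by move=> w hw; rewrite (ltn_eqF (ltn_trans hw hv)).
  - by rewrite ltnS leqNgt hv.
  by rewrite hv ltnSn addbF.
rewrite odd_permM lev_sign // IH ?(ltnW hl) //.
rewrite (ltn_eqF hl) /= addbF.
have [e|ne] := eqVneq l k.-1; first by rewrite e prednK // eqxx.
rewrite /=; case: eqP => // e; move/eqP: ne; by rewrite -e.
Qed.

Lemma mkp_sign a : 0 < k -> odd_perm (mkp a) = odd (Lc' k.-1 a).
Proof.
move=> hk.
have -> : mkp a = mkp (fun v => (size v < k) && a v) by apply: mkp_eq => v ->.
by rewrite tr_sign // eqxx.
Qed.

End Leaves.

From mathcomp Require Import zify.
Set Implicit Arguments. Unset Strict Implicit. Unset Printing Implicit Defensive.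

Lemma count_enum_card (T : finType) (A : {set T}) (P : pred T) :
  count P (enum A) = \sum_(x in A) P x.
Proof. by rewrite -sumn_count sumnE big_map big_enum. Qed.
Lemma bigxor (T : Type) (P : pred T) s : \big[addb/false]_(u <- s) P u = odd (count P s).
Proof. by elim: s => [|x s IH]; rewrite ?big_nil ?big_cons //= IH oddD; case: (P x). Qed.

Section Main.
Variable k : nat.
Hypothesis hk : 1 < k.

Lemma hk0 : 0 < k. Proof. exact: ltnW. Qed.
Lemma hk1 : 0 < k.-1. Proof. by rewrite -ltnS prednK ?hk0. Qed.

Lemma inG (g : {perm leaf k}) : (g \in G k) = is_tree_aut g && ~~ odd_perm g.
Proof. by rewrite !inE. Qed.

Lemma level_indexE l (g : {perm leaf k}) : level_index l g = Lc' l (vact g).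
Proof. by apply: eq_card => v; rewrite !inE /active /vact size_tuple. Qed.

Lemma llcE (g : {perm leaf k}) b : last_level_count g b = Lcb k.-1 (vact g) b.
Proof. by apply: eq_card => v; rewrite !inE /active /vact size_tuple. Qed.

Lemma act_mul (g h : {perm leaf k}) v : is_tree_aut g -> is_tree_aut h -> size v < k ->
  vact (g * h)%g v = lcomp (vact g) (vact h) v.
Proof.
move=> tg th hv; rewrite {1}(tree_eq tg) {1}(tree_eq th) mkpM act_mkp //.
Qed.

Lemma Lc_eq l (a b : lab) : l < k -> (forall v, size v < k -> a v = b v) -> Lc' l a = Lc' l b.
Proof. by move=> hl h; apply: eq_card => v; rewrite !inE h // size_tuple. Qed.

Lemma Lcb_eq l (a b : lab) c : l < k -> (forall v, size v < k -> a v = b v) -> Lcb l a c = Lcb l b c.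
Proof. by move=> hl h; apply: eq_card => v; rewrite !inE h // size_tuple. Qed.

Lemma Lc_mul l (g h : {perm leaf k}) : l < k -> is_tree_aut g -> is_tree_aut h ->
  odd (Lc' l (vact (g * h)%g)) = odd (Lc' l (vact g)) (+) odd (Lc' l (vact h)).
Proof.
move=> hl tg th; rewrite -Lc_lcomp; congr odd; apply: Lc_eq => // v hv.
exact: act_mul.
Qed.

Lemma sign_tree (g : {perm leaf k}) : is_tree_aut g -> odd_perm g = odd (Lc' k.-1 (vact g)).
Proof. by move=> tg; rewrite {1}(tree_eq tg) mkp_sign ?hk0. Qed.

Lemma Lcb_G (g : {perm leaf k}) c : g \in G k -> odd (Lcb k.-1 (vact g) c) = odd (Lcb k.-1 (vact g) false).
Proof.
rewrite inG => /andP [tg sg]; move: sg; rewrite sign_tree // Lc_split oddD.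
by case: c => //; case: (odd (Lcb _ _ false)); case: (odd (Lcb _ _ true)).
Qed.

Lemma Lcb_mul (g h : {perm leaf k}) : is_tree_aut g -> h \in G k ->
  odd (Lcb k.-1 (vact (g * h)%g) false) = odd (Lcb k.-1 (vact g) false) (+) odd (Lcb k.-1 (vact h) false).
Proof.
move=> tg hG; have th : is_tree_aut h by move: hG; rewrite inG => /andP [].
rewrite (@Lcb_eq _ _ (lcomp (vact g) (vact h))); last by move=> v hv; apply: act_mul.
  by rewrite Lcb_lcomp ?hk1 // Lcb_G.
by rewrite prednK ?hk0.
Qed.

Lemma G_mul (g h : {perm leaf k}) : g \in G k -> h \in G k -> (g * h)%g \in G k.
Proof.
rewrite !inG => /andP [tg sg] /andP [th sh].
by rewrite tree_mul // odd_permM (negbTE sg) (negbTE sh).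
Qed.

Lemma G_inv (g : {perm leaf k}) : g \in G k -> (g^-1)%g \in G k.
Proof. by rewrite !inG odd_permV => /andP [tg ->]; rewrite tree_inv. Qed.

Lemma G1 : (1%g : {perm leaf k}) \in G k.
Proof. by rewrite inG tree1 odd_perm1. Qed.

Lemma hom_comm (phi : {perm leaf k} -> bool)
  (hphi : forall a b, a \in G k -> b \in G k -> phi (a * b)%g = phi a (+) phi b)
  x y : x \in G k -> y \in G k -> phi [~ x, y]%g = false.
Proof.
move=> hx hy.
have p1 : phi 1%g = false by have := hphi _ _ G1 G1; rewrite mulg1 => e; move: e; case: (phi 1%g).
have pinv : forall a, a \in G k -> phi (a^-1)%g = phi a.
  move=> a ha; have := hphi _ _ (G_inv ha) ha; rewrite mulVg p1.
  by case: (phi a^-1%g); case: (phi a).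
rewrite /commg /conjg (hphi (x^-1)%g) ?G_inv ?G_mul ?G_inv // (hphi (y^-1)%g) ?G_inv ?G_mul // hphi // !pinv //.
by case: (phi x); case: (phi y).
Qed.

Definition K : {set {perm leaf k}} :=
  [set g | (g \in G k) && [forall l : 'I_k.-1, ~~ odd (Lc' l (vact g))] && ~~ odd (Lcb k.-1 (vact g) false)].

Lemma act1 v : vact (1%g : {perm leaf k}) v = false.
Proof.
rewrite /vact perm1; case: (ltnP (size v) k) => hv.
  by rewrite nth_zero_ext // nth_default.
by rewrite nth_default // size_tuple.
Qed.

Lemma group_K : group_set K.
Proof.
apply/group_setP; split.
  rewrite inE G1 /=; apply/andP; split.
    apply/forallP => l; rewrite /Lc' card_sumb big1 // => v _; by rewrite act1.
  by rewrite /Lcb card_sumb big1 // => v _; rewrite act1.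
move=> g h; rewrite !inE => /andP [/andP [/andP [tg sg] /forallP gl] gb] /andP [/andP [/andP [th sh] /forallP hl] hb].
have hG : h \in G k by rewrite inG th sh.
rewrite tree_mul // odd_permM (negbTE sg) (negbTE sh) /= Lcb_mul // (negbTE gb) (negbTE hb) andbT.
apply/forallP => l; rewrite Lc_mul ?(negbTE (gl l)) ?(negbTE (hl l)) //.
by apply: leq_trans (ltn_ord l) _; apply: leq_pred.
Qed.

Lemma comm_sub_K : [~: G k, G k]%g \subset K.
Proof.
have -> : K = Group group_K by [].
rewrite /commutator gen_subG; apply/subsetP => z /imset2P [x y hx hy ->].
rewrite /= inE.
have phiL : forall l : 'I_k.-1, odd (Lc' l (vact [~ x, y]%g)) = false.
  move=> l; apply: (hom_comm (phi := fun g => odd (Lc' l (vact g)))) => // a b ha hb.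
  apply: Lc_mul.
  - by apply: leq_trans (ltn_ord l) _; apply: leq_pred.
  - by move: ha; rewrite inG => /andP [].
  - by move: hb; rewrite inG => /andP [].
rewrite (hom_comm (phi := fun g => odd (Lcb k.-1 (vact g) false))) //; last first.
  by move=> a b ha hb; apply: Lcb_mul => //; move: ha; rewrite inG => /andP [].
rewrite andbT; apply/andP; split.
  by rewrite /commg /conjg; apply: G_mul; [apply: G_inv | apply: G_mul; [apply: G_inv | apply: G_mul]].
by apply/forallP => l; rewrite phiL.
Qed.

Definition H := [~: G k, G k]%G.

Definition Ach l (p : lab) := exists d : lab,
  [/\ mkp k d \in H, forall v, size v < l -> d v = false & forall v, size v = l -> d v = p v].

Lemma Ach_ext l p q : (forall v, size v = l -> p v = q v) -> Ach l p -> Ach l q.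
Proof. by move=> e [d [h1 h2 h3]]; exists d; split => // v hv; rewrite h3 // e. Qed.

Lemma Ach0 l : Ach l (fun _ => false).
Proof. by exists (fun _ => false); split => //; rewrite mkp1. Qed.

Lemma Ach_xor l p q : Ach l p -> Ach l q -> Ach l (fun v => p v (+) q v).
Proof.
move=> [d1 [h1 h2 h3]] [d2 [g1 g2 g3]]; exists (lcomp d1 d2); split.
- by rewrite -mkpM groupM.
- by move=> v hv; rewrite /lcomp h2 // g2 // size_img.
move=> v hv; rewrite /lcomp img_id ?h3 ?g3 // => w hw; apply: h2; rewrite -hv //.
Qed.

Lemma Ach_comm l (a c : lab) : l < k -> (forall v, a v -> size v = l) -> (forall v, c (img c v) = c v) ->
  mkp k a \in G k -> mkp k c \in G k -> Ach l (fun v => a v (+) a (img c v)).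
Proof.
move=> hl ha hc aG cG.
have ha0 : forall v, size v < l -> a v = false.
  by move=> v hv; apply/negP => /ha e; move: hv; rewrite e ltnn.
have xinv : ((mkp k a)^-1)%g = mkp k a by apply/eqP; rewrite eq_invg_mul (@mkp_invol k a l ha).
have finv : ((mkp k c)^-1)%g = mkp k c.
  apply/eqP; rewrite eq_invg_mul mkpM mkp1 // => v _; by rewrite /lcomp hc addbb.
have key : forall v, size v <= l -> lcomp a (lcomp c (lcomp a c)) v = a v (+) a (img c v).
  move=> v hv; rewrite /lcomp.
  have e1 : img a v = v by apply: img_id => w hw; apply: ha0; apply: leq_trans hw hv.
  have e2 : img a (img c v) = img c v.
    by apply: img_id => w; rewrite size_img => hw; apply: ha0; apply: leq_trans hw hv.
  rewrite e1 e2 hc.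
  by case: (c v); case: (a v); case: (a (img c v)).
exists (lcomp a (lcomp c (lcomp a c))); split.
- by have := mem_commg aG cG; rewrite /commg /conjg xinv finv !mkpM.
- by move=> v hv; rewrite key ?(ltnW hv) // !ha0 ?size_img.
by move=> v hv; rewrite key // hv.
Qed.

Lemma Lc0 l (a : lab) : (forall v : l.-tuple bool, a v = false) -> Lc' l a = 0.
Proof. by move=> h; rewrite /Lc' card_sumb big1 // => v _; rewrite h. Qed.

Lemma Lc1 l z : size z = l -> Lc' l (fun v => v == z) = 1.
Proof.
move=> hz; have hz' : size z == l by apply/eqP.
rewrite /Lc' -(cards1 (Tuple hz')); apply: eq_card => v; rewrite !inE.
by rewrite -val_eqE.
Qed.

Lemma pair_mid l u : l < k.-1 -> size u = l -> Ach l (fun v => (v == nseq l false) (+) (v == u)).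
Proof.
move=> hl hu.
have hlk : l < k by apply: leq_trans hl (leq_pred k).
apply: Ach_ext (@Ach_comm l (fun v => v == nseq l false) (fun v => nth false u (size v)) hlk _ _ _ _).
- move=> v hv; congr addb; apply/eqP/eqP => [e|->].
    apply: (eq_from_nth (x0 := false)); first by rewrite hv hu.
    move=> i; rewrite hv => hi; have := congr1 (fun s => nth false s i) e.
    rewrite nth_img ?hv // nth_nseq hi size_takel ?hv ?(ltnW hi) //.
    by case: (nth false v i); case: (nth false u i).
  apply: (eq_from_nth (x0 := false)); first by rewrite size_img size_nseq.
  move=> i; rewrite size_img hu => hi.
  by rewrite nth_img ?hu // nth_nseq hi size_takel ?hu ?(ltnW hi) // addbb.
- by move=> v /eqP ->; rewrite size_nseq.
- by move=> v; rewrite size_img.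
- by rewrite inG tree_mkp eu_sign ?size_nseq // (ltn_eqF hl).
rewrite inG tree_mkp mkp_sign ?hk0 // Lc0 // => v.
by rewrite size_tuple nth_default // hu ltnW.
Qed.

Lemma pair_last u : size u = k.-1 ->
  Ach k.-1 (fun v => (v == nth false u 0 :: nseq (k.-1).-1 false) (+) (v == u)).
Proof.
move=> hu; set l := k.-1; set b := nth false u 0.
have hl0 : 0 < l := hk1.
have hlk : l < k by rewrite /l prednK ?hk0.
set z := b :: nseq l.-1 false; set w := ~~ b :: nseq l.-1 false.
have sz : size z = l by rewrite /= size_nseq prednK.
have sw : size w = l by rewrite /= size_nseq prednK.
set c : lab := fun v => (0 < size v) && (nth false v 0 == b) && nth false u (size v).
have nc : forall v i, i < size v -> nth false (img c v) i = nth false v i (+) ((0 < i) && (nth false v 0 == b) && nth false u i).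
  move=> v i hi; rewrite nth_img // /c size_takel ?(ltnW hi) //.
  by case: i hi => //= i hi; rewrite (nth_take _ (ltn0Sn i)).
have n0 : forall v, 0 < size v -> nth false (img c v) 0 = nth false v 0 by move=> v hv; rewrite nc //= addbF.
have AC := @Ach_comm l (fun v => (v == z) (+) (v == w)) c hlk.
apply: (Ach_ext _ (AC _ _ _ _)).
- move=> v hv; have hv0 : 0 < size v by rewrite hv.
  case hb : (nth false v 0 == b).
    have -> : (img c v == w) = false.
      by apply/negbTE/negP => /eqP e; have := n0 v hv0; rewrite e => h; move: hb; rewrite -h /= negb_eqF.
    have -> : (v == w) = false.
      by apply/negbTE/negP => /eqP e; move: hb; rewrite e /= negb_eqF.
    have -> : (img c v == z) = (v == u).
      apply/eqP/eqP => [e|->].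
        apply: (eq_from_nth (x0 := false)); first by rewrite hv hu.
        move=> i; rewrite hv; case: i => [|i] hi; first by rewrite (eqP hb).
        have := congr1 (fun s => nth false s i.+1) e; rewrite nc ?hv // hb /=.
        rewrite nth_nseq; case: ifP => _; by case: (nth false v i.+1); case: (nth false u i.+1).
      apply: (eq_from_nth (x0 := false)); first by rewrite size_img sz hu.
      move=> i; rewrite size_img hu; case: i => [|i] hi; first by rewrite n0 ?hu.
      by rewrite nc ?hu //= eqxx addbb nth_nseq; case: ifP.
    by rewrite !addbF.
  have -> : img c v = v.
    apply: (eq_from_nth (x0 := false)); first by rewrite size_img.
    by move=> i; rewrite size_img => hi; rewrite nc // hb andbF addbF.
  have -> : (v == z) = false by apply/negbTE/negP => /eqP e; move: hb; rewrite e /= eqxx.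
  have -> : (v == u) = false by apply/negbTE/negP => /eqP e; move: hb; rewrite e eqxx.
  by rewrite /= addbb.
- by move=> v; case: eqP => [->//|_]; case: eqP => [->//|_].
- move=> v; rewrite /c size_img; case: (posnP (size v)) => [->//|hv0] /=.
  by rewrite n0.
- rewrite inG tree_mkp mkp_sign ?hk0 // /Lc' odd_card_xor.
  by move: (Lc1 sz) (Lc1 sw); rewrite /Lc' => -> ->.
rewrite inG tree_mkp mkp_sign ?hk0 // Lc0 // => v.
  by rewrite /c size_tuple (nth_default _ (eq_leq hu)) andbF.
Qed.

Definition sA l (a : lab) := [seq val w | w <- enum [set w : l.-tuple bool | a w]].

Lemma sA_uniq l a : uniq (sA l a).
Proof. by rewrite map_inj_uniq ?enum_uniq //; apply: val_inj. Qed.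

Lemma sA_size l a u : u \in sA l a -> size u = l.
Proof. by move=> /mapP [w _ ->]; rewrite size_tuple. Qed.

Lemma sA_mem l a v : size v = l -> (v \in sA l a) = a v.
Proof.
move=> hv; have hv' : size v == l by apply/eqP.
have -> : v = val (Tuple hv') by [].
by rewrite mem_map ?mem_enum ?inE //; apply: val_inj.
Qed.

Lemma count_sA l a (P : pred (seq bool)) :
  count P (sA l a) = #|[set w : l.-tuple bool | a w && P w]|.
Proof.
rewrite count_map count_enum_card card_sumb big_mkcond /=; apply: eq_bigr => w _.
by rewrite inE; case: (a w).
Qed.

Lemma Ach_list l (Z : seq bool -> seq bool)
  (hZ : forall u, size u = l -> Ach l (fun v => (v == Z u) (+) (v == u))) s :
  (forall u, u \in s -> size u = l) ->
  Ach l (fun v => \big[addb/false]_(u <- s) ((v == Z u) (+) (v == u))).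
Proof.
elim: s => [|x s IH] hs.
  by apply: (Ach_ext _ (Ach0 l)) => v _; rewrite big_nil.
apply: (Ach_ext _ (Ach_xor (hZ x _) (IH _))).
- by move=> v _; rewrite big_cons.
- by apply: hs; rewrite inE eqxx.
by move=> u us; apply: hs; rewrite inE us orbT.
Qed.

Lemma Ach_gen l (Z : seq bool -> seq bool)
  (hZ : forall u, size u = l -> Ach l (fun v => (v == Z u) (+) (v == u))) a :
  (forall v, size v = l -> ~~ odd (count (fun u => v == Z u) (sA l a))) -> Ach l a.
Proof.
move=> hc; apply: (Ach_ext _ (Ach_list hZ (@sA_size l a))) => v hv.
rewrite big_split /= !bigxor (negbTE (hc v hv)) /=.
have -> : count (fun u => v == u) (sA l a) = count_mem v (sA l a).
  by apply: eq_count => u; rewrite eq_sym.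
by rewrite count_uniq_mem ?sA_uniq // sA_mem //; case: (a v).
Qed.

Lemma Ach_mid l a : l < k.-1 -> ~~ odd (Lc' l a) -> Ach l a.
Proof.
move=> hl ha; apply: (@Ach_gen l (fun _ => nseq l false)).
  by move=> u hu; apply: pair_mid.
move=> v hv; case: (v =P nseq l false) => _.
  by rewrite count_predT size_map -cardE.
by rewrite count_pred0.
Qed.

Lemma Ach_last a : ~~ odd (Lcb k.-1 a false) -> ~~ odd (Lcb k.-1 a true) -> Ach k.-1 a.
Proof.
move=> hf ht.
apply: (@Ach_gen k.-1 (fun u => nth false u 0 :: nseq (k.-1).-1 false)).
  by move=> u hu; apply: pair_last.
move=> v hv.
set Z := fun u : seq bool => nth false u 0 :: nseq (k.-1).-1 false.
have e : forall u, (v == Z u) = (v == Z v) && (nth false u 0 == nth false v 0).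
  move=> u; case: eqP => [e|ne].
    by rewrite e /Z /=; apply/esym/andP; split; apply/eqP.
  case: eqP => // evz; case: eqP => // ev0; exfalso; apply: ne; rewrite evz /Z ev0 //.
rewrite (eq_count e); case: (v == Z v) => /=; last by rewrite count_pred0.
rewrite count_sA.
have -> : #|[set w : (k.-1).-tuple bool | a w && (nth false w 0 == nth false v 0)]| =
   Lcb k.-1 a (nth false v 0) by [].
by case: (nth false v 0).
Qed.

Lemma K_H : forall n (a : lab), (forall v, size v < k - n -> a v = false) -> mkp k a \in K -> mkp k a \in H.
Proof.
have HK : H \subset K by apply: comm_sub_K.
have KK : K = Group group_K by [].
elim=> [|n IH] a ha aK.
  by rewrite mkp1 ?group1 // => v hv; apply: ha; rewrite subn0.
case: (leqP k n) => hkn.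
  have e0 : k - n = 0 by apply/eqP; rewrite subn_eq0.
  by apply: IH => // v; rewrite e0.
set l := k - n.+1.
have hl : l.+1 = k - n by rewrite /l; lia.
have hlk : l < k by rewrite /l; lia.
have hA : Ach l a.
  move: aK; rewrite /K in_set => /andP [/andP [aG /forallP aL] aB].
  have ea : forall v, size v < k -> vact (mkp k a) v = a v by move=> v hv; apply: act_mkp.
  case: (ltnP l k.-1) => hl1.
    have := aL (Ordinal hl1); rewrite (@Lc_eq _ _ a) // => h; exact: Ach_mid h.
  have e : l = k.-1 by lia.
  rewrite e; apply: Ach_last.
    by move: aB; rewrite (@Lcb_eq _ _ a) //; lia.
  by rewrite -(@Lcb_eq _ (vact (mkp k a))) ?Lcb_G //; lia.
case: hA => d [dH d0 dl].
have dK : mkp k d \in K by apply: (subsetP HK).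
have a'K : mkp k (lcomp a d) \in K by rewrite -mkpM KK groupM.
have a'H : mkp k (lcomp a d) \in H.
  apply: IH => // v hv; rewrite /lcomp; rewrite -hl ltnS leq_eqVlt in hv.
  case/orP: hv => hv.
    rewrite img_id; first by rewrite dl ?(eqP hv) // addbb.
    by move=> w hw; apply: ha; rewrite (eqP hv) in hw.
  by rewrite ha // d0 // size_img.
have -> : mkp k a = (mkp k (lcomp a d) * (mkp k d)^-1)%g by rewrite -mkpM mulgK.
by rewrite groupM ?groupV.
Qed.

End Main.

Unset Implicit Arguments.

Theorem lemma8 (k : nat) (hk : 2 <= k) (g : {perm leaf k}) (hg : g \in G k) :
  g \in ([~: G k, G k])%g <->
  [/\ forall l : nat, l < k.-1 -> ~~ odd (level_index l g),
      ~~ odd (last_level_count g false) &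
      ~~ odd (last_level_count g true)].
Proof.
split.
- move=> hc; have := subsetP (comm_sub_K hk) g hc.
  rewrite /K in_set => /andP [/andP [_ /forallP hL] hB].
  split.
  + by move=> l hl; rewrite level_indexE; apply: (hL (Ordinal hl)).
  + by rewrite llcE.
  + by rewrite llcE (Lcb_G hk).
case=> hL hf ht.
have tg : is_tree_aut g by move: hg; rewrite inG => /andP [].
have gK : g \in K k.
  rewrite /K in_set hg /= -llcE hf andbT.
  by apply/forallP => l; rewrite -level_indexE; apply: hL (ltn_ord l).
have e := tree_eq tg.
have := @K_H k hk k (vact g); rewrite -e; apply => //.
by move=> v; rewrite subnn.
Qed.
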